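(* Let $\lambda_1\ge\lambda_2\ge1$ with either $\lambda_1-\lambda_2=1$ or $\lambda_1-\lambda_2\ge 3$, and let $n=\lambda_1+\lambda_2$. Let $(\mu_1,\mu_2)$ be a partition of $n$ with $\mu_1\ge\mu_2\ge1$. Then there exist commuting nilpotent $n\times n$ matrices $B,A$ with $\mathrm{sh}(B)=(\lambda_1,\lambda_2)$ and $\mathrm{sh}(A)=(\mu_1,\mu_2)$ if and only if $(\mu_1,\mu_2)=(\lambda_1,\lambda_2)$.
   Context: $\mathbb{F}$ is an algebraically closed field of characteristic $0$ and matrices are over $\mathbb{F}$. For a nilpotent matrix $A$, $\mathrm{sh}(A)$ is the partition of $n$ given by the sizes of the Jordan blocks of its Jordan canonical form. *)

(* Defs.v *)
From HB Require Import structures.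
From mathcomp Require Import all_boot all_order all_algebra.
Set Implicit Arguments. Unset Strict Implicit. Unset Printing Implicit Defensive.
Import GRing.Theory.
Local Open Scope ring_scope.

Definition nil_jordan (F : fieldType) (k : nat) : 'M[F]_k :=
  \matrix_(i < k, j < k) (i.+1 == j)%:R.

Definition mx_nilpotent (F : fieldType) (n : nat) (A : 'M[F]_n) : Prop :=
  exists k : nat, iter k (mulmx A) 1%:M = 0.

Definition shape2 (F : fieldType) (n : nat) (A : 'M[F]_n) (a b : nat) : Prop :=
  exists (e : (a + b)%N = n) (P : 'M[F]_n),
    P \in unitmx /\
    P *m A *m invmx P = castmx (e, e) (block_mx (nil_jordan F a) 0 0 (nil_jordan F b)).

(* Main.v *)
Require Import Defs.
From HB Require Import structures.
From mathcomp Require Import all_boot all_order all_algebra.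
From mathcomp Require Import zify.
Import GRing.Theory.
Local Open Scope ring_scope.

Set Implicit Arguments. Unset Strict Implicit. Unset Printing Implicit Defensive.
Section Ent.
Variable F : fieldType.

Definition ent p q (X : 'M[F]_(p,q)) (i j : nat) : F :=
  oapp (fun i' : 'I_p => oapp (fun j' : 'I_q => X i' j') 0 (insub j)) 0 (insub i).

Lemma entE p q (X : 'M[F]_(p,q)) (i : 'I_p) (j : 'I_q) : ent X i j = X i j.
Proof. by rewrite /ent !valK. Qed.

Lemma entK p q (X : 'M[F]_(p,q)) i j (hi : (i < p)%N) (hj : (j < q)%N) :
  ent X i j = X (Ordinal hi) (Ordinal hj).
Proof. by rewrite -entE. Qed.

Lemma ent_oor p q (X : 'M[F]_(p,q)) i j : ~~ ((i < p) && (j < q))%N -> ent X i j = 0.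
Proof.
move=> h; rewrite /ent; case: insubP => [i' hi _|_] /=; case: insubP => [j' hj _|_] //=.
  by rewrite hi hj in h.
all: by case: insub.
Qed.

Lemma ent_mul p q r (X : 'M[F]_(p,q)) (Y : 'M[F]_(q,r)) i j :
  ent (X *m Y) i j = \sum_(k < q) ent X i k * ent Y k j.
Proof.
case: (boolP ((i < p) && (j < r))%N) => [/andP[hi hj]|h].
  rewrite entK mxE; apply: eq_bigr => k _.
  by rewrite -[i]/(nat_of_ord (Ordinal hi)) -[j]/(nat_of_ord (Ordinal hj)) !entE.
rewrite ent_oor // big1 // => k _.
move: h; rewrite negb_and => /orP[h|h].
  by rewrite (@ent_oor _ _ X) ?mul0r // negb_and h.
by rewrite (@ent_oor _ _ Y) ?mulr0 // negb_and h orbT.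
Qed.

Lemma ent_add p q (X Y : 'M[F]_(p,q)) i j : ent (X + Y) i j = ent X i j + ent Y i j.
Proof.
case: (boolP ((i < p) && (j < q))%N) => [/andP[hi hj]|h].
  by rewrite !(entK _ hi hj) mxE.
by rewrite !ent_oor // addr0.
Qed.

Lemma ent_scale p q a (X : 'M[F]_(p,q)) i j : ent (a *: X) i j = a * ent X i j.
Proof.
case: (boolP ((i < p) && (j < q))%N) => [/andP[hi hj]|h].
  by rewrite !(entK _ hi hj) mxE.
by rewrite !ent_oor // mulr0.
Qed.

Lemma ent0 p q i j : ent (0 : 'M[F]_(p,q)) i j = 0.
Proof.
case: (boolP ((i < p) && (j < q))%N) => [/andP[hi hj]|h].
  by rewrite !(entK _ hi hj) mxE.
by rewrite !ent_oor.
Qed.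

Lemma ent_eq p q (X Y : 'M[F]_(p,q)) : (forall i j, ent X i j = ent Y i j) -> X = Y.
Proof. by move=> h; apply/matrixP => i j; rewrite -!entE. Qed.

Lemma sum_delta p (c : nat) (f : nat -> F) :
  \sum_(k < p) (c == k)%:R * f k = (c < p)%N%:R * f c.
Proof.
elim: p => [|p IH]; first by rewrite big_ord0 mul0r.
rewrite big_ord_recr /= IH ltnS.
have [E|ne] := eqVneq c p.
  by rewrite E ltnn leqnn /= mul0r add0r mul1r.
by rewrite /= mul0r addr0 [(c <= p)%N]leq_eqVlt (negbTE ne).
Qed.



Lemma ent_J p i j : ent (nil_jordan F p) i j = ((i.+1 == j) && (j < p))%N%:R.
Proof.
case: (boolP ((i < p) && (j < p))%N) => [/andP[hi hj]|h].
  by rewrite entK mxE /= hj andbT.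
rewrite ent_oor //; case: eqP => //= E; move: h; rewrite -E.
by case: (ltnP i.+1 p) => // hp; rewrite (ltnW hp).
Qed.

Lemma JX p q (X : 'M[F]_(p,q)) i j : ent (nil_jordan F p *m X) i j = ent X i.+1 j.
Proof.
rewrite ent_mul.
rewrite (eq_bigr (fun k : 'I_p => (i.+1 == k)%:R * ent X k j)); last first.
  by move=> k _; rewrite ent_J ltn_ord andbT.
rewrite (sum_delta _ _ (fun k => ent X k j)); case: ltnP => h; first by rewrite mul1r.
by rewrite mul0r ent_oor // negb_and -leqNgt h.
Qed.

Lemma XJ p q (X : 'M[F]_(p,q)) i j :
  ent (X *m nil_jordan F q) i j = if j is j'.+1 then (j < q)%N%:R * ent X i j' else 0.
Proof.
rewrite ent_mul; case: j => [|j].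
  by rewrite big1 // => k _; rewrite ent_J /= mulr0.
rewrite (eq_bigr (fun k : 'I_q => (j.+1 < q)%N%:R * ((j == k)%:R * ent X i k))); last first.
  by move=> k _; rewrite ent_J eqSS eq_sym; case: (j == k); case: (j.+1 < q)%N; rewrite /= ?mulr0 ?mulr1 ?mul1r ?mul0r.
rewrite -mulr_sumr (sum_delta _ _ (fun k => ent X i k)); case: (ltnP j.+1 q) => h.
  by rewrite (ltnW h) mul1r.
by rewrite /= ?mul0r.
Qed.

Lemma commJ p q (X : 'M[F]_(p,q)) :
  nil_jordan F p *m X = X *m nil_jordan F q ->
  forall i j, (j < q)%N -> ent X i.+1 j = if j is j'.+1 then ent X i j' else 0.
Proof.
move=> e i j hj; rewrite -JX e XJ; case: j hj => // j hj.
by rewrite hj mul1r.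
Qed.

Section Toeplitz.
Variables (p q : nat) (X : 'M[F]_(p,q)).
Hypothesis hX : nil_jordan F p *m X = X *m nil_jordan F q.

Lemma TZ i j : (j < i)%N -> ent X i j = 0.
Proof.
elim: j i => [|j IH] [|i] //= h.
  case: (ltnP 0 q) => hq; first by rewrite (commJ hX).
  by rewrite ent_oor // negb_and -!leqNgt hq orbT.
case: (ltnP j.+1 q) => hq; first by rewrite (commJ hX) // IH.
by rewrite ent_oor // negb_and -!leqNgt hq orbT.
Qed.

Lemma TT i j : (j.+1 < q)%N -> ent X i.+1 j.+1 = ent X i j.
Proof. by move=> h; rewrite (commJ hX). Qed.

Lemma TZ' i j : (j + p < i + q)%N -> ent X i j = 0.
Proof.
move: {2}(p - i)%N (leqnn (p - i)%N) => k; elim: k i j => [|k IH] i j hk h.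
  by rewrite ent_oor // negb_and -leqNgt -subn_eq0 -leqn0 hk.
case: (ltnP i p) => hi; last by rewrite ent_oor // negb_and -leqNgt hi.
have hj : (j.+1 < q)%N.
  by lia.
rewrite -(TT i hj); apply: IH; last by lia.
by lia.
Qed.


Lemma Tdiag t : (t < q)%N -> ent X t t = ent X 0 0.
Proof. by elim: t => // t IH h; rewrite TT // IH // ltnW. Qed.

Lemma Tdiag1 t : (t.+1 < q)%N -> ent X t t.+1 = ent X 0 1.
Proof. by elim: t => // t IH h; rewrite TT // IH // ltnW. Qed.

End Toeplitz.

Lemma ent_block m1 m2 n1 n2 (A : 'M[F]_(m1,n1)) (B : 'M[F]_(m1,n2))
  (C : 'M[F]_(m2,n1)) (D : 'M[F]_(m2,n2)) i j :
  ent (block_mx A B C D) i j =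
  if (i < m1)%N then (if (j < n1)%N then ent A i j else ent B i (j - n1))
  else (if (j < n1)%N then ent C (i - m1) j else ent D (i - m1) (j - n1)).
Proof.
case: (boolP ((i < m1 + m2) && (j < n1 + n2))%N) => [/andP[hi hj]|h]; last first.
  rewrite ent_oor //; case: ltnP => hi1; case: ltnP => hj1; rewrite ent_oor //;
  move: h; rewrite !negb_and -!leqNgt => /orP[h|h]; apply/orP; (try by left; lia); by right; lia.
rewrite entK.
case: (splitP (Ordinal hi)) => i1 /= Ei; subst i; case: (splitP (Ordinal hj)) => j1 /= Ej; subst j.
- have -> : Ordinal hi = lshift m2 i1 by apply: val_inj.
  have -> : Ordinal hj = lshift n2 j1 by apply: val_inj.
  by rewrite block_mxEul entE.
- have -> : Ordinal hi = lshift m2 i1 by apply: val_inj.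
  have -> : Ordinal hj = rshift n1 j1 by apply: val_inj.
  by rewrite block_mxEur addKn entE.
- have -> : Ordinal hi = rshift m1 i1 by apply: val_inj.
  have -> : Ordinal hj = lshift n2 j1 by apply: val_inj.
  by rewrite block_mxEdl addKn entE.
- have -> : Ordinal hi = rshift m1 i1 by apply: val_inj.
  have -> : Ordinal hj = rshift n1 j1 by apply: val_inj.
  by rewrite block_mxEdr !addKn entE.
Qed.

Definition urow n (t : nat) : 'rV[F]_n := \row_(j < n) (t == j)%:R.

Lemma ent_urow n (t : nat) j : ent (urow n t) 0 j = ((t == j) && (j < n))%N%:R.
Proof.
case: (boolP ((0 < 1) && (j < n))%N) => [/andP[hi hj]|h].
  by rewrite entK mxE /= hj andbT.
rewrite ent_oor //; move: h => /= h; by rewrite (negbTE h) andbF.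
Qed.

Lemma rv_eq n (u w : 'rV[F]_n) : (forall j, ent u 0 j = ent w 0 j) -> u = w.
Proof.
move=> h; apply: ent_eq => i j; case: i => [|i]; first exact: h.
by rewrite !ent_oor.
Qed.

Lemma sum_split m n (f : nat -> F) :
  \sum_(k < m + n) f k = \sum_(k < m) f k + \sum_(k < n) f (m + k)%N.
Proof. by rewrite big_split_ord. Qed.

Lemma sum_one n (f : nat -> F) (t : nat) :
  (forall i, (i < n)%N -> i != t -> f i = 0) -> \sum_(i < n) f i = (t < n)%N%:R * f t.
Proof.
move=> h; rewrite -sum_delta; apply: eq_bigr => i _.
case: (eqVneq t i) => [E|ne]; first by rewrite mul1r.
by rewrite mul0r h // eq_sym.
Qed.

Lemma ent_urow_mul n p (t : nat) (X : 'M[F]_(n,p)) j : ent (urow n t *m X) 0 j = (t < n)%N%:R * ent X t j.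
Proof.
rewrite ent_mul (eq_bigr (fun k : 'I_n => (t == k)%:R * ent X k j)).
  by rewrite (sum_delta _ _ (fun k => ent X k j)).
by move=> k _; rewrite ent_urow ltn_ord andbT.
Qed.

Definition mpow n (A : 'M[F]_n) k := iter k (mulmx A) 1%:M.

Lemma mpowC n (A : 'M[F]_n) k : A *m mpow A k = mpow A k *m A.
Proof. by elim: k => [|k IH] /=; rewrite ?mulmx1 ?mul1mx // -/(mpow A k) {1}IH mulmxA. Qed.

Lemma mpowSr n (A : 'M[F]_n) k : mpow A k.+1 = mpow A k *m A.
Proof. exact: mpowC. Qed.

Lemma mpow_conj n (A P : 'M[F]_n) k : P \in unitmx ->
  mpow (P *m A *m invmx P) k = P *m mpow A k *m invmx P.
Proof.
move=> hP; elim: k => [|k IH] /=; first by rewrite mulmx1 mulmxV.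
by rewrite -/(mpow _ k) IH !mulmxA mulmxKV.
Qed.

Section Core.
Variables (a b : nat).
Hypotheses (Hab : (b + 3 <= a)%N) (Hb : (0 < b)%N).
Variable M : 'M[F]_(a+b).
Let J := block_mx (nil_jordan F a) 0 0 (nil_jordan F b).
Hypothesis HJ : J *m M = M *m J.
Hypothesis Hnil : exists K, mpow M K = 0.

Let M11 := ulsubmx M.
Let M12 := ursubmx M.
Let M21 := dlsubmx M.
Let M22 := drsubmx M.

Lemma blocks_comm :
  [/\ nil_jordan F a *m M11 = M11 *m nil_jordan F a,
      nil_jordan F a *m M12 = M12 *m nil_jordan F b,
      nil_jordan F b *m M21 = M21 *m nil_jordan F a &
      nil_jordan F b *m M22 = M22 *m nil_jordan F b].
Proof.
have e := HJ; rewrite /J -(submxK M) !mulmx_block !mulmx0 !mul0mx !addr0 !add0r in e.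
by case/eq_block_mx: e => e1 e2 e3 e4; split.
Qed.

Lemma eM i j : ent M i j =
  if (i < a)%N then (if (j < a)%N then ent M11 i j else ent M12 i (j - a))
  else (if (j < a)%N then ent M21 (i - a) j else ent M22 (i - a) (j - a)).
Proof. by rewrite -{1}(submxK M) ent_block. Qed.

Lemma W1 i j : (j < i)%N -> (i < a)%N -> ent M i j = 0.
Proof.
move=> h hi; have [e1 _ _ _] := blocks_comm.
by rewrite eM hi (ltn_trans h hi) (TZ e1).
Qed.

Lemma W2 i j : (i < a)%N -> (a <= j)%N -> (j < a + i)%N -> ent M i j = 0.
Proof.
move=> hi hj h; have [_ e2 _ _] := blocks_comm.
rewrite eM hi ltnNge hj /= (TZ e2) //; lia.
Qed.

Lemma W3 i j : (a <= i)%N -> (j + b < i)%N -> ent M i j = 0.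
Proof.
move=> hi h; have [_ _ e3 _] := blocks_comm.
case: (ltnP i (a + b)) => hib; last by rewrite ent_oor // negb_and -leqNgt hib.
have hj : (j < a)%N by lia.
by rewrite eM ltnNge hi hj /= (TZ' e3) //; lia.
Qed.

Lemma W4 i j : (a <= i)%N -> (a <= j)%N -> (j < i)%N -> ent M i j = 0.
Proof.
move=> hi hj h; have [_ _ _ e4] := blocks_comm.
rewrite eM ltnNge hi ltnNge hj /= (TZ e4) //; lia.
Qed.

Definition p0 := ent M 0 0.
Definition p1 := ent M 0 1.
Definition s0 := ent M a a.

Lemma Wd1 t : (t < a)%N -> ent M t t = p0.
Proof.
move=> h; have [e1 _ _ _] := blocks_comm.
rewrite /p0 !eM h (leq_ltn_trans (leq0n t) h) (Tdiag e1) //.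
Qed.

Lemma Wd3 t : (t.+1 < a)%N -> ent M t t.+1 = p1.
Proof.
move=> h; have [e1 _ _ _] := blocks_comm.
have ha : (1 < a)%N by lia.
rewrite /p1 !eM (ltnW h) h (leq_ltn_trans (leq0n _) ha) ha (Tdiag1 e1) //.
Qed.

Lemma Wd2 t : (a <= t)%N -> (t < a + b)%N -> ent M t t = s0.
Proof.
move=> h1 h2; have [_ _ _ e4] := blocks_comm.
rewrite /s0 !eM ltnn ltnNge h1 /= subnn (Tdiag e4) //; lia.
Qed.

Lemma ent_vM (v : 'rV[F]_(a+b)) j : ent (v *m M) 0 j =
  \sum_(i < a) ent v 0 i * ent M i j + \sum_(i < b) ent v 0 (a + i)%N * ent M (a + i)%N j.
Proof. by rewrite ent_mul (sum_split _ _ (fun i => ent v 0 i * ent M i j)). Qed.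

Lemma eig2 (v w : 'rV[F]_(a+b)) s r t : v *m M = 0 -> w *m M = s *: w + r *: v ->
  ent w 0 t != 0 -> ent v 0 t = 0 -> s = 0.
Proof.
move=> hv hw hwt hvt.
have key : forall k, exists c, w *m mpow M k = s ^+ k *: w + c *: v.
  elim=> [|k [c IH]]; first by exists 0; rewrite /= mulmx1 scale0r addr0 expr0 scale1r.
  exists (s ^+ k * r); rewrite mpowSr mulmxA IH mulmxDl -!scalemxAl hv hw scaler0 addr0.
  by rewrite scalerDr !scalerA exprSr.
case: Hnil => K hK; have [c e] := key K; move: e; rewrite hK mulmx0 => /(congr1 (fun X => ent X 0 t)).
rewrite ent0 ent_add !ent_scale hvt mulr0 addr0 => /esym/eqP.
by rewrite mulf_eq0 (negbTE hwt) orbF expf_eq0 => /andP[_ /eqP].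
Qed.

Lemma p0_0 : p0 = 0.
Proof.
have ha : (a.-1 < a + b)%N by lia.
apply: (@eig2 0 (urow (a+b) a.-1) p0 0 a.-1); first by rewrite mul0mx.
- rewrite scaler0 addr0; apply: rv_eq => j; rewrite ent_urow_mul ha mul1r ent_scale ent_urow.
  case: (ltngtP j a.-1) => hj /=.
  + by rewrite W1 ?mulr0 //; lia.
  + case: (ltnP j (a + b)) => hjb; last first.
      by rewrite ent_oor ?mulr0 // negb_and -!leqNgt hjb orbT.
    rewrite W2 ?mulr0 //; lia.
  + by rewrite hj Wd1 ?ha ?mulr1 //; lia.
- by rewrite ent_urow eqxx ha oner_neq0.
- by rewrite ent0.
Qed.

Lemma s0_0 : s0 = 0.
Proof.
have ha : (a.-1 < a + b)%N by lia.
have hb : ((a + b).-1 < a + b)%N by lia.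
apply: (@eig2 (urow (a+b) a.-1) (urow (a+b) (a+b).-1) s0 (ent M (a+b).-1 a.-1) (a+b).-1).
- apply: rv_eq => j; rewrite ent_urow_mul ha mul1r ent0.
  case: (ltngtP j a.-1) => hj.
  + by rewrite W1 //; lia.
  + case: (ltnP j (a + b)) => hjb; last first.
      by rewrite ent_oor // negb_and -!leqNgt hjb orbT.
    rewrite W2 //; lia.
  + by rewrite hj Wd1 ?p0_0 //; lia.
- apply: rv_eq => j; rewrite ent_urow_mul hb mul1r ent_add !ent_scale !ent_urow.
  case: (ltnP j (a + b)) => hjb; last first.
    by rewrite ent_oor ?andbF ?mulr0 ?addr0 // negb_and -!leqNgt hjb orbT.
  rewrite ?andbT.
  case: (ltngtP j a.-1) => hj.
  + rewrite W3; last by lia. 2: by lia.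
    rewrite (eqn_leq (a+b).-1) (leqNgt (a+b).-1) (_ : (j < (a+b).-1)%N) /= ?mulr0 ?addr0 //; lia.
  + case: (ltngtP j (a+b).-1) => hj2 /=.
    * rewrite W4 ?mulr0 ?addr0 //; lia.
    * lia.
    * by rewrite hj2 mulr1 Wd2 ?mulr0 ?addr0 //; lia.
  + subst j; rewrite ?eqxx ?mulr1 (eqn_leq (a+b).-1) (leqNgt (a+b).-1) (_ : (a.-1 < (a+b).-1)%N) /= ?mulr0 ?add0r //; lia.
- by rewrite ent_urow eqxx hb oner_neq0.
- rewrite ent_urow; case: eqP => //= E; lia.
Qed.

Definition Q k c (v : 'rV[F]_(a+b)) : Prop :=
  [/\ (forall j, (j < k)%N -> ent v 0 j = 0),
      (forall j, (j.+1 < k)%N -> ent v 0 (a + j)%N = 0) & ent v 0 k = c].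

Lemma Qstep k c v : (k.+1 < a)%N -> Q k c v -> Q k.+1 (c * p1) (v *m M).
Proof.
move=> hk [h1 h2 h3]; split.
- move=> j hj; rewrite ent_vM !big1 ?addr0 // => i _; have hib := ltn_ord i.
  + case: (ltnP i.+1 k) => hik; first by rewrite h2 // mul0r.
    rewrite W3 ?mulr0 //; lia.
  + case: (ltnP i k) => hik; first by rewrite h1 // mul0r.
    case: (ltngtP j i) => hji.
    * by rewrite W1 ?mulr0.
    * lia.
    * by rewrite hji Wd1 ?p0_0 ?mulr0.
- move=> j hj; rewrite ent_vM !big1 ?addr0 // => i _; have hib := ltn_ord i.
  + case: (ltnP i.+1 k) => hik; first by rewrite h2 // mul0r.
    case: (ltngtP j i) => hji.
    * rewrite W4 ?mulr0 //; lia.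
    * lia.
    * by rewrite hji Wd2 ?s0_0 ?mulr0 //; lia.
  + case: (ltnP i k) => hik; first by rewrite h1 // mul0r.
    rewrite W2 ?mulr0 //; lia.
- rewrite ent_vM [X in _ + X]big1 ?addr0; last first.
    move=> i _; have hib := ltn_ord i; case: (ltnP i.+1 k) => hik; first by rewrite h2 // mul0r.
    rewrite W3 ?mulr0 //; lia.
  rewrite (@sum_one a (fun i => ent v 0 i * ent M i k.+1) k).
    by rewrite (ltnW hk) mul1r h3 Wd3.
  move=> i hi ne; case: (ltngtP i k) => hik.
  + by rewrite h1 // mul0r.
  + case: (eqVneq i k.+1) => [->|ne2].
      by rewrite Wd1 ?p0_0 ?mulr0.
    rewrite W1 ?mulr0 //; lia.
  + by move: ne; rewrite hik eqxx.
Qed.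

Lemma Qiter k : (k < a)%N -> Q k (p1 ^+ k) (urow (a+b) 0 *m mpow M k).
Proof.
elim: k => [|k IH] hk.
  rewrite /mpow /= mulmx1; split => //.
  by rewrite ent_urow eqxx /= (_ : 0 < a + b)%N //; lia.
by rewrite mpowSr mulmxA exprS mulrC; apply: Qstep => //; apply: IH; lia.
Qed.

Lemma p1_0 : mpow M a.-1 = 0 -> p1 = 0.
Proof.
move=> h; have ha : (a.-1 < a)%N by lia.
have [_ _ e] := Qiter ha; move: e; rewrite h mulmx0 ent0 => /esym/eqP; rewrite expf_eq0 => /andP[_ /eqP] //.
Qed.

Lemma Mz i j : p1 = 0 ->
  [|| [&& (i < a)%N, (j < a)%N & (j <= i)%N], [&& (i.+1 < a)%N & (j == i.+1)],
      [&& (i < a)%N, (a <= j)%N & (j < a + i)%N], [&& (a <= i)%N & (j + b < i)%N],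
      [&& (a <= i)%N, (a <= j)%N & (j <= i)%N], (a + b <= i)%N | (a + b <= j)%N] ->
  ent M i j = 0.
Proof.
move=> hp1 /or4P[/and3P[h1 h2 h3]|/andP[h1 /eqP ->]|/and3P[h1 h2 h3]|/orP[/andP[h1 h2]|/orP[/and3P[h1 h2 h3]|/orP[h|h]]]].
- case: (ltngtP j i) => hji; first exact: W1.
    lia.
  by rewrite hji Wd1 ?p0_0.
- by rewrite Wd3.
- exact: W2.
- exact: W3.
- case: (ltngtP j i) => hji; first exact: W4.
    lia.
  case: (ltnP i (a + b)) => hib; first by rewrite hji Wd2 ?s0_0.
  by rewrite ent_oor // negb_and -leqNgt hib.
- by rewrite ent_oor // negb_and -leqNgt h.
- by rewrite ent_oor // negb_and -!leqNgt h orbT.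
Qed.

Definition gn (i : nat) : nat := nth 0%N [:: a.-1; a.-2; (a - 3)%N; (a + b).-1] i.

Lemma gn_lt (i : 'I_4) : (gn i < a + b)%N.
Proof. rewrite /gn; case: i => [[|[|[|[|i]]]] hi] //=; lia. Qed.

Definition g (i : 'I_4) : 'I_(a + b) := Ordinal (gn_lt i).

Lemma g_inj i j : (g i == g j) = (i == j).
Proof.
rewrite -val_eqE /= /gn.
case: i => [[|[|[|[|i]]]] hi] //; case: j => [[|[|[|[|j]]]] hj] //=;
  rewrite -?val_eqE /=; case: eqP => //; lia.
Qed.

Lemma rowz (i : 'I_4) (j : nat) : p1 = 0 -> j != a.-1 -> ent M (gn i) j = 0.
Proof.
move=> hp1 hj; apply: Mz => //; move: hj => /eqP hj; rewrite /gn.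
case: i => [[|[|[|[|i]]]] hi] //=; lia.
Qed.

Lemma rankM : p1 = 0 -> (\rank M <= a + b - 3)%N.
Proof.
move=> hp1.
pose S := rowsub g (1%:M : 'M[F]_(a+b)).
have hS : S *m S^T = 1%:M.
  rewrite /S -rowsubE; apply/matrixP => i j; rewrite !mxE g_inj eq_sym //.
have rS : (4 <= \rank S)%N.
  by rewrite -{1}(mxrank1 F 4) -hS mxrankM_maxl.
have ha : (a.-1 < a + b)%N by lia.
pose l : 'I_(a + b) := Ordinal ha.
have hSM : S *m M = rowsub g M *m delta_mx l l.
  rewrite /S -rowsubE; apply/matrixP => i j; rewrite !mxE (bigD1 l) //= big1 => [|k hk]; last first.
    by rewrite !mxE (negbTE hk) mulr0.
  rewrite !mxE eqxx /= addr0.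
  case: (eqVneq j l) => [->|hj] /=; first by rewrite mulr1n mulr1.
  rewrite mulr0n mulr0 -(entE M) /= (rowz i) //.
have r1 : (\rank (S *m M) <= 1)%N.
  by rewrite hSM (leq_trans (mxrankM_maxr _ _)) // mxrank_delta.
have := mxrank_mul_min S M; have := rank_leq_row M; lia.
Qed.

Lemma K_block : mpow M a.-1 = 0 -> (\rank M <= a + b - 3)%N.
Proof. by move=> h; apply: rankM; apply: p1_0. Qed.

End Core.

Lemma ent_tr m n (X : 'M[F]_(m,n)) i j : ent X^T i j = ent X j i.
Proof.
case: (boolP ((i < n) && (j < m))%N) => [/andP[hi hj]|h].
  by rewrite (entK _ hi hj) (entK _ hj hi) mxE.
rewrite !ent_oor //; move: h; by rewrite andbC.
Qed.

Lemma ent_pow_J p k i j : ent (mpow (nil_jordan F p) k) i j = ((i + k == j) && (j < p))%N%:R.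
Proof.
elim: k j => [|k IH] j.
  case: (boolP ((i < p) && (j < p))%N) => [/andP[hi hj]|h].
    by rewrite (entK _ hi hj) /mpow /= mxE addn0 hj andbT.
  rewrite ent_oor // addn0; case: eqP => //= E; move: h; rewrite E.
  by case: (j < p)%N.
rewrite mpowSr ent_mul.
rewrite (eq_bigr (fun l : 'I_p => (i + k == l)%:R * ((l.+1 == j) && (j < p))%N%:R)); last first.
  by move=> l _; rewrite IH ent_J ltn_ord andbT.
rewrite (sum_delta _ _ (fun l => ((l.+1 == j) && (j < p))%N%:R)) addnS.
case: (ltnP (i + k) p) => h; first by rewrite mul1r.
rewrite mul0r; case: eqP => //= E; subst j.
by rewrite ltnNge (leq_trans h (leqnSn _)) /=.
Qed.

Lemma pow_J0 p k : (p <= k)%N -> mpow (nil_jordan F p) k = 0.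
Proof.
move=> h; apply: ent_eq => i j; rewrite ent_pow_J ent0.
case: eqP => //= <-; rewrite ltnNge (leq_trans h (leq_addl _ _)) //.
Qed.

Lemma pow_block m n (A : 'M[F]_m) (B : 'M[F]_n) k :
  mpow (block_mx A 0 0 B) k = block_mx (mpow A k) 0 0 (mpow B k).
Proof.
elim: k => [|k IH]; first by rewrite /mpow /= -scalar_mx_block.
by rewrite /mpow /= -!/(mpow _ k) IH mulmx_block !mulmx0 !mul0mx !addr0 !add0r.
Qed.

Lemma rank_conj n (A P : 'M[F]_n) : P \in unitmx -> \rank (P *m A *m invmx P) = \rank A.
Proof.
move=> hP; apply/eqP; rewrite eqn_leq; apply/andP; split.
  by apply: (leq_trans (mxrankM_maxl _ _)); exact: mxrankM_maxr.
have hA : A = invmx P *m (P *m A *m invmx P) *m P.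
  by rewrite !mulmxA mulVmx // mul1mx -mulmxA mulVmx // mulmx1.
rewrite {1}hA; by apply: (leq_trans (mxrankM_maxl _ _)); exact: mxrankM_maxr.
Qed.

Lemma rank_J p : (p.-1 <= \rank (nil_jordan F p))%N.
Proof.
have e : nil_jordan F p *m (nil_jordan F p)^T = pid_mx p.-1.
  apply: ent_eq => i j; rewrite ent_mul.
  rewrite (eq_bigr (fun l : 'I_p => (i.+1 == l)%:R * ((j.+1 == l) && (l < p))%N%:R)); last first.
    by move=> l _; rewrite ent_tr !ent_J !ltn_ord andbT.
  rewrite (sum_delta _ _ (fun l => ((j.+1 == l) && (l < p))%N%:R)).
  case: (boolP ((i < p) && (j < p))%N) => [/andP[hi hj]|h].
    rewrite (entK _ hi hj) mxE /= eqSS eq_sym.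
    case: (ltnP i.+1 p) => h1.
      rewrite mul1r (_ : (i < p.-1)%N = true) //; lia.
    rewrite (_ : (i < p.-1)%N = false) ?andbF /= ?mulr0n ?mul0r //; lia.
  rewrite ent_oor //; case: (ltnP i.+1 p) => h1; last by rewrite mul0r.
  rewrite mul1r; case: eqP => //= E; exfalso; move/negP: h; apply; apply/andP; split; lia.
by have := mxrankM_maxl (nil_jordan F p) (nil_jordan F p)^T; rewrite e rank_pid_mx ?leq_pred.
Qed.

Lemma shape_pow N (A : 'M[F]_N) m1 m2 k : shape2 A m1 m2 -> (m2 <= m1)%N -> (m1 <= k)%N -> mpow A k = 0.
Proof.
case=> e [P [hP hPA]] h21 hk; subst N; rewrite castmx_id in hPA.
have h := mpow_conj A k hP; rewrite hPA pow_block !pow_J0 ?(leq_trans h21) // block_mx0 in h.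
have -> : mpow A k = invmx P *m (P *m mpow A k *m invmx P) *m P.
  by rewrite !mulmxA mulVmx // mul1mx -mulmxA mulVmx // mulmx1.
by rewrite -h mulmx0 mul0mx.
Qed.

Lemma shape_rank N (A : 'M[F]_N) m1 m2 : shape2 A m1 m2 -> (0 < m1)%N -> (0 < m2)%N -> (N - 2 <= \rank A)%N.
Proof.
case=> e [P [hP hPA]] h1 h2; subst N; rewrite castmx_id in hPA.
rewrite -(rank_conj A hP) hPA rank_diag_block_mx.
have := rank_J m1; have := rank_J m2; lia.
Qed.

Lemma K_gen N (B A : 'M[F]_N) a b : shape2 B a b -> (b + 3 <= a)%N -> (0 < b)%N ->
  A *m B = B *m A -> (exists K, mpow A K = 0) -> mpow A a.-1 = 0 -> (\rank A <= N - 3)%N.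
Proof.
case=> e [P [hP hPB]] hab hb hc [K hK] ha; subst N; rewrite castmx_id in hPB.
rewrite -(rank_conj A hP); apply: K_block => //.
- rewrite -hPB.
  have -> : P *m B *m invmx P *m (P *m A *m invmx P) = P *m (B *m A) *m invmx P.
    by rewrite !mulmxA mulmxKV.
  have -> : P *m A *m invmx P *m (P *m B *m invmx P) = P *m (A *m B) *m invmx P.
    by rewrite !mulmxA mulmxKV.
  by rewrite hc.
- by exists K; rewrite mpow_conj // hK mulmx0 mul0mx.
- by rewrite mpow_conj // ha mulmx0 mul0mx.
Qed.

Lemma core N (B A : 'M[F]_N) a b m1 m2 :
  A *m B = B *m A -> (exists K, mpow A K = 0) -> (exists K, mpow B K = 0) ->
  shape2 B a b -> shape2 A m1 m2 -> (b + 3 <= a)%N -> (0 < b)%N ->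
  (0 < m2)%N -> (m2 <= m1)%N -> (m1 + m2 = a + b)%N -> m1 = a.
Proof.
move=> hc nA nB sB sA hab hb hm2 hm21 hs.
have eN : (a + b)%N = N by case: sB.
have rA := shape_rank sA (leq_trans hm2 hm21) hm2.
have ha0 : (0 < a)%N by lia.
have rB := shape_rank sB ha0 hb.
have hA : mpow A a.-1 != 0.
  apply/eqP => h; have := K_gen sB hab hb hc nA h; lia.
have h1 : (a <= m1)%N.
  case: (leqP a m1) => // h; exfalso.
  move: hA; rewrite (shape_pow sA hm21) ?eqxx //; lia.
case: (ltngtP a m1) => h2; [| lia | by []].
have : mpow B m1.-1 = 0 by apply: (shape_pow sB); lia.
move=> hB; have := K_gen sA (_ : m2 + 3 <= m1)%N hm2 (esym hc) nB hB; last by lia.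
Qed.

End Ent.

Unset Implicit Arguments. Set Strict Implicit. Set Printing Implicit Defensive.
Theorem lemma3p3 (F : closedFieldType) (charF0 : [pchar F] =i pred0)
    (l1 l2 m1 m2 : nat) :
  (l2 <= l1)%N -> (1 <= l2)%N -> ((l1 - l2)%N = 1%N \/ (3 <= l1 - l2)%N) ->
  (m2 <= m1)%N -> (1 <= m2)%N -> (m1 + m2)%N = (l1 + l2)%N ->
  (exists B A : 'M[F]_(l1 + l2),
      mx_nilpotent B /\ mx_nilpotent A /\ B *m A = A *m B /\
      shape2 B l1 l2 /\ shape2 A m1 m2)
  <-> (m1 = l1 /\ m2 = l2).
Proof.
move=> h21 hl2 hd hm21 hm2 hs; split.
  case=> B [A [nB [nA [hc [sB sA]]]]].
  case: hd => hd.
    case: (eqVneq m1 l1) => [E|ne]; first by split => //; lia.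
    have e := @core F _ A B m1 m2 l1 l2 hc nB nA sA sB.
    have := e (_ : (m2 + 3 <= m1)%N) hm2 hl2 h21 (esym hs); lia.
  have := @core F _ B A l1 l2 m1 m2 (esym hc) nA nB sB sA (_ : (l2 + 3 <= l1)%N) hl2 hm2 hm21 hs; lia.
case=> -> ->.
pose G := block_mx (nil_jordan F l1) 0 0 (nil_jordan F l2).
have nG : mx_nilpotent G.
  by exists l1; rewrite -/(mpow G l1) pow_block !pow_J0 // block_mx0.
have sG : shape2 G l1 l2.
  exists erefl, 1%:M; split; first exact: unitmx1.
  by rewrite castmx_id invmx1 mul1mx mulmx1.
by exists G, G.
Qed.
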